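(* Let $\omega$ be an antisymmetric bivector. For bundles with connection $(E,\nabla_E)$, $(F,\nabla_F)$ and a bundle map $T:E\to F$, define $Q(T)=T+\frac\lambda2\omega^{ij}\nabla_{Fi}\circ\nabla_j(T)$, where $\nabla_j(T)=\nabla_{Fj}\circ T-T\circ\nabla_{Ej}$. Then $Q(T):Q(E)\to Q(F)$ is a left $A_1$-module map (to order $\lambda$). If $T$ intertwines the connections then $Q(T)=T$, which is an $A_1$-bimodule map. In general, for bundle maps $S:E\to F$ and $T:F\to G$ between bundles with connection, $$Q(T\circ S)=Q(T)\circ Q(S)+\tfrac\lambda2\omega^{ij}\nabla_i(T)\circ\nabla_j(S).$$
   Context: Work over $\mathbb{C}[\lambda]/(\lambda^2)$. $A=C^\infty(M)$, coordinates $x^i$, $a_{,i}=\partial a/\partial x^i$, summation convention. $A_1$: $A[\lambda]/(\lambda^2)$ with $a\bullet b=ab+\frac\lambda2\omega^{ij}a_{,i}b_{,j}$. For a bundle $E$ with connection $\nabla_E$ (components $\nabla_{Ei}$ along $\partial_i$), $Q(E)$ is $E$ (sections, $\lambda$-extended) with $a\bullet e=ae+\frac\lambda2\omega^{ij}a_{,i}\nabla_{Ej}e$ and $e\bullet a=ae-\frac\lambda2\omega^{ij}a_{,i}\nabla_{Ej}e$. A left module map $\phi$ satisfies $\phi(a\bullet e)=a\bullet\phi(e)$. *)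

(* Defs.v *)
(* Algebraic (coordinate) model of the setting:
   A = C^oo(M) is modelled by a commutative ring R (with 2 invertible),
   the coordinate derivations a |-> a_{,i} by derivations d i : R -> R (i : 'I_n),
   sections of a bundle E by an R-module E (lmodType R), a connection by
   operators nab i : E -> E (components along d_i) satisfying Leibniz,
   and bundle maps by R-linear maps.  Elements of X[lambda]/(lambda^2) are
   pairs (x0, x1) standing for x0 + lambda x1. *)
From HB Require Import structures.
From mathcomp Require Import all_boot all_order all_algebra.
Set Implicit Arguments. Unset Strict Implicit. Unset Printing Implicit Defensive.
Import GRing.Theory.
Local Open Scope ring_scope.

Section Defs.
Variables (R : comUnitRingType) (n : nat).

Definition half : R := (2%:R)^-1.

Definition is_derivation (d : R -> R) : Prop :=
  (forall a b, d (a + b) = d a + d b) /\ (forall a b, d (a * b) = d a * b + a * d b).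

Definition antisymmetric_bivector (om : 'I_n -> 'I_n -> R) : Prop :=
  forall i j, om i j = - om j i.

Definition is_connection (d : 'I_n -> R -> R) (E : lmodType R) (nab : 'I_n -> E -> E) : Prop :=
  forall i, (forall e f, nab i (e + f) = nab i e + nab i f) /\
            (forall (a : R) e, nab i (a *: e) = d i a *: e + a *: nab i e).

Definition padd (V : zmodType) (x y : V * V) : V * V := (x.1 + y.1, x.2 + y.2).

(* product of A_1 : a * b = ab + lambda/2 omega^{ij} a_{,i} b_{,j} *)
Definition A1_mul (d : 'I_n -> R -> R) (om : 'I_n -> 'I_n -> R) (a b : R * R) : R * R :=
  (a.1 * b.1, a.1 * b.2 + a.2 * b.1
     + \sum_(i < n) \sum_(j < n) half * om i j * d i a.1 * d j b.1).

(* left action on Q(E) : a * e = ae + lambda/2 omega^{ij} a_{,i} nabla_{Ej} e *)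
Definition Q_lact (d : 'I_n -> R -> R) (om : 'I_n -> 'I_n -> R) (E : lmodType R)
    (nab : 'I_n -> E -> E) (a : R * R) (e : E * E) : E * E :=
  (a.1 *: e.1, a.1 *: e.2 + a.2 *: e.1
     + \sum_(i < n) \sum_(j < n) (half * om i j * d i a.1) *: nab j e.1).

(* right action on Q(E) : e * a = ae - lambda/2 omega^{ij} a_{,i} nabla_{Ej} e *)
Definition Q_ract (d : 'I_n -> R -> R) (om : 'I_n -> 'I_n -> R) (E : lmodType R)
    (nab : 'I_n -> E -> E) (e : E * E) (a : R * R) : E * E :=
  (a.1 *: e.1, a.1 *: e.2 + a.2 *: e.1
     - \sum_(i < n) \sum_(j < n) (half * om i j * d i a.1) *: nab j e.1).

Definition nablaT (E F : lmodType R) (nE : 'I_n -> E -> E) (nF : 'I_n -> F -> F)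
    (T : E -> F) (j : 'I_n) (e : E) : F := nF j (T e) - T (nE j e).

Definition QT (om : 'I_n -> 'I_n -> R) (E F : lmodType R) (nE : 'I_n -> E -> E)
    (nF : 'I_n -> F -> F) (T : E -> F) (e : E * E) : F * F :=
  (T e.1, T e.2 + \sum_(i < n) \sum_(j < n) (half * om i j) *: nF i (nablaT nE nF T j e.1)).

Definition lam_ext (E F : lmodType R) (T : E -> F) (e : E * E) : F * F := (T e.1, T e.2).

Definition comp_corr (om : 'I_n -> 'I_n -> R) (E F G : lmodType R) (nE : 'I_n -> E -> E)
    (nF : 'I_n -> F -> F) (nG : 'I_n -> G -> G) (S : E -> F) (T : F -> G)
    (e : E * E) : G * G :=
  (0, \sum_(i < n) \sum_(j < n)
        (half * om i j) *: nablaT nF nG T i (nablaT nE nF S j e.1)).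

End Defs.

(* Main.v *)
Require Import Defs.
From mathcomp Require Import all_boot all_order all_algebra.
Import GRing.Theory.
Local Open Scope ring_scope.
Set Implicit Arguments. Unset Strict Implicit.

Lemma nab0 (R : comUnitRingType) n d (E : lmodType R) (nab : 'I_n -> E -> E) :
  is_connection d nab -> forall i, nab i 0 = 0.
Proof. move=> h i; have [hA _] := h i; have := hA 0 0; rewrite addr0.
by move/(congr1 (fun x => x - nab i 0)); rewrite subrr addrK. Qed.

Lemma nabB (R : comUnitRingType) n d (E : lmodType R) (nab : 'I_n -> E -> E) :
  is_connection d nab -> forall i x y, nab i (x - y) = nab i x - nab i y.
Proof. move=> h i x y; have [hA _] := h i.
have hN : nab i (- y) = - nab i y.
  by apply/eqP; rewrite -subr_eq0 opprK -hA addNr (nab0 h).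
by rewrite hA hN. Qed.

Lemma nabZ (R : comUnitRingType) n d (E : lmodType R) (nab : 'I_n -> E -> E) :
  is_connection d nab -> forall i a x, nab i (a *: x) = d i a *: x + a *: nab i x.
Proof. by move=> h i; have [_ hZ] := h i. Qed.

Lemma sum2D n (V : zmodType) (A B : 'I_n -> 'I_n -> V) :
  \sum_i \sum_j A i j + \sum_i \sum_j B i j = \sum_i \sum_j (A i j + B i j).
Proof. rewrite -big_split; apply eq_bigr => i _; by rewrite -big_split. Qed.

Lemma scaler_sum2 (R : comUnitRingType) n (V : lmodType R) (a : R) (A : 'I_n -> 'I_n -> V) :
  a *: \sum_i \sum_j A i j = \sum_i \sum_j a *: A i j.
Proof. rewrite scaler_sumr; apply eq_bigr => i _; by rewrite scaler_sumr. Qed.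

Lemma subDD (R : comUnitRingType) (V : lmodType R) (x y z : V) (a : R) :
  x + a *: y - (x + a *: z) = a *: (y - z).
Proof. by rewrite opprD addrACA subrr add0r scalerBr. Qed.

Lemma linear_sum2 (R : comUnitRingType) n (U V : lmodType R) (T : {linear U -> V}) (A : 'I_n -> 'I_n -> U) :
  T (\sum_i \sum_j A i j) = \sum_i \sum_j T (A i j).
Proof. rewrite linear_sum; apply eq_bigr => i _; by rewrite linear_sum. Qed.

Theorem lemma3p2 (R : comUnitRingType) (n : nat)
  (h2 : (2%:R : R) \is a GRing.unit)
  (d : 'I_n -> R -> R) (hd : forall i, is_derivation (d i))
  (om : 'I_n -> 'I_n -> R) (hom : antisymmetric_bivector om)
  (E F G : lmodType R)
  (nE : 'I_n -> E -> E) (nF : 'I_n -> F -> F) (nG : 'I_n -> G -> G)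
  (hE : is_connection d nE) (hF : is_connection d nF) (hG : is_connection d nG) :
  (* (1) Q(T) is a left A_1-module map *)
  (forall T : {linear E -> F}, forall (a : R * R) (e : E * E),
     QT om nE nF T (Q_lact d om nE a e) = Q_lact d om nF a (QT om nE nF T e))
  /\
  (* (2) if T intertwines the connections, Q(T) = T and it is a bimodule map *)
  (forall T : {linear E -> F},
     (forall (j : 'I_n) (e : E), nF j (T e) = T (nE j e)) ->
     (forall e, QT om nE nF T e = lam_ext T e) /\
     (forall (a : R * R) (e : E * E),
        lam_ext T (Q_lact d om nE a e) = Q_lact d om nF a (lam_ext T e) /\
        lam_ext T (Q_ract d om nE e a) = Q_ract d om nF (lam_ext T e) a))
  /\
  (* (3) Q(T o S) = Q(T) o Q(S) + lambda/2 omega^{ij} nabla_i(T) o nabla_j(S) *)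
  (forall (S : {linear E -> F}) (T : {linear F -> G}) (e : E * E),
     QT om nE nG (T \o S) e =
     padd (QT om nF nG T (QT om nE nF S e)) (comp_corr om nE nF nG S T e)).
Proof.
split; [|split].
- move=> T [a1 a2] [e1 e2]; rewrite /QT /Q_lact /nablaT /=; congr pair; first by rewrite linearZ.
  rewrite !linearD !linearZ /= linear_sum /=.
  under eq_bigr do rewrite linear_sum /=.
  rewrite scaler_sum2.
  rewrite -!addrA; congr (_ + _); rewrite [RHS]addrCA; congr (_ + _).
  rewrite !sum2D; apply eq_bigr => i _; apply eq_bigr => j _.
  rewrite linearZ /= (nabZ hF) (nabZ hE) linearD !linearZ /=.
  rewrite subDD (nabZ hF) scalerDr scalerA scalerBr [RHS]addrC addrA.
  by congr (_ + _); rewrite addrC subrK.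
- move=> T hT; split.
    move=> [e1 e2]; rewrite /QT /lam_ext /nablaT /=; congr pair.
    rewrite big1 ?addr0 // => i _; rewrite big1 // => j _.
    by rewrite hT subrr (nab0 hF) scaler0.
  move=> [a1 a2] [e1 e2]; rewrite /lam_ext /Q_lact /Q_ract /=.
  split; congr pair; rewrite /= ?linearZ //= ?linearB !linearD !linearZ /= linear_sum2;
    congr (_ + _); try congr (- _);
    apply eq_bigr => i _; apply eq_bigr => j _; by rewrite linearZ hT.
- move=> S T [e1 e2]; rewrite /QT /padd /comp_corr /nablaT /=; congr pair; first by rewrite addr0.
  rewrite linearD linear_sum2 -!addrA; congr (_ + _); rewrite !sum2D.
  apply eq_bigr => i _; apply eq_bigr => j _.
  rewrite linearZ -!scalerDr; congr (_ *: _).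
  have [hA _] := hG i.
  rewrite [RHS]addrCA [X in _ = _ + X]addrC subrK -hA; congr (nG i _).
  by rewrite linearB addrA subrK.
Qed.
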